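(* In the basic model with $n$ odd, the worst-case deterministic round complexity of the nontrivial move problem is $\Theta(\log(N/n))$. That is, there is an algorithm solving it in $O(\log(N/n))$ rounds, and every deterministic algorithm needs $\Omega(\log(N/n))$ rounds in the worst case.
   Context: Model (basic): $n>4$ agents are at distinct, arbitrary initial positions on a circle of circumference $1$ and act in synchronised unit-time rounds. Each agent has its own notion of right (clockwise) and left; these need not be consistent across agents. At the start of each round every agent $a$ chooses $\mathrm{dir}_a\in\{\text{right},\text{left}\}$ and moves at unit speed. Agents never pass: two colliding agents instantly reverse direction. There is no communication. At the end of a round each agent learns only the clockwise distance, in its own orientation, from its start to its end position. Agents have distinct IDs in $\{1,\dots,N\}$, $N\ge n$ known, and know only the parity of $n$. Rotation index: if $n_C$ agents start clockwise and $n_A$ anticlockwise (objective orientation), each agent moves to the initial position of the agent $(n_C-n_A)\bmod n$ places clockwise; this is the rotation index. A nontrivial move is a round whose rotation index is not in $\{0,n/2\}$. The nontrivial move problem is to assign to each agent a direction $\mathrm{dir}_a$ so that the round in which all agents start in these directions is a nontrivial move. *)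

(* Defs.v *)
From Stdlib Require Import Reals.
From mathcomp Require Import all_boot all_order all_algebra.

Set Implicit Arguments.
Unset Strict Implicit.
Unset Printing Implicit Defensive.

(*  - The circle is [0,1) with the objective clockwise direction being *)
(*    increasing coordinate (mod 1).                                   *)
(*  - Initial positions are labelled by "slots" 0..n-1 in objective    *)
(*    clockwise order: [pos k] is the position of slot k (k < n).      *)
(*  - Agents are indexed by their initial slot a : 'I_n.               *)
(*  - [chir a] = true iff agent a's own "right/clockwise" coincides    *)
(*    with the objective clockwise direction.                          *)
Record instance (n N : nat) := Instance {
  pos : nat -> R;
  pos_range : forall k, k < n -> Rle R0 (pos k) /\ Rlt (pos k) R1;
  pos_sorted : forall i j, i < j -> j < n -> Rlt (pos i) (pos j);
  chir : 'I_n -> bool;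
  ident : 'I_n -> nat;
  ident_inj : injective ident;
  ident_range : forall a, 0 < ident a <= N
}.

Definition cw_dist (u v : R) : R :=
  if Rle_dec u v then Rminus v u else Rplus (Rminus v u) R1.

(* A deterministic algorithm: each agent, knowing its ID and the list of
   observations it made so far (oldest first), chooses its direction for
   the next round, in its OWN orientation (true = right = its clockwise).
   The algorithm may depend on N and on the parity of n (it is chosen
   after N, and in the statement only odd n are considered), but not
   on n itself, the positions, or the chiralities. *)
Definition algorithm := nat -> seq R -> bool.

Definition rot_index (n : nat) (cwb : 'I_n -> bool) : nat :=
  let nC := #|[pred a | cwb a]| in
  let nA := #|[pred a | ~~ cwb a]| in
  absz (((nC%:Z - nA%:Z) %% n%:Z)%Z).

Definition nontrivial (n r : nat) : bool := (r != 0) && (r.*2 != n).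

Section Run.
Variables (n N : nat) (alg : algorithm) (I : instance n N).

Definition rot_of (h : 'I_n -> seq R) : nat :=
  rot_index (fun a => alg (ident I a) (h a) == chir I a).

Definition observe (a : 'I_n) (k r : nat) : R :=
  let k' := (k + r) %% n in
  if chir I a then cw_dist (pos I k) (pos I k')
  else cw_dist (pos I k') (pos I k).

(* State before round t (0-based): current slot and history of each agent.
   In a round with rotation index r every agent moves to the initial
   position of the agent r places clockwise, i.e. slot k -> (k + r) mod n. *)
Fixpoint state (t : nat) : ('I_n -> nat) * ('I_n -> seq R) :=
  match t with
  | 0 => (fun a => nat_of_ord a, fun _ => [::])
  | t'.+1 =>
      let s := (state t').1 in
      let h := (state t').2 in
      let r := rot_of h in
      (fun a => (s a + r) %% n, fun a => rcons (h a) (observe a (s a) r))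
  end.

Definition round_rot (t : nat) : nat := rot_of (state t).2.

End Run.

Definition solves_within (alg : algorithm) (n N T : nat) : Prop :=
  forall I : instance n N, exists2 t, t < T & nontrivial n (round_rot alg I t).

(* Main.v *)
Require Import Defs.
From Stdlib Require Import Reals.
From mathcomp Require Import all_boot all_order all_algebra.
From mathcomp Require Import zify.
From Stdlib Require Import Classical.

Lemma nseqS (T : Type) (x : T) t : nseq t.+1 x = rcons (nseq t x) x.
Proof. by elim: t => //= t IH; rewrite IH. Qed.

Lemma cw_dist_same p : cw_dist p p = R0.
Proof.
rewrite /cw_dist; case: Rle_dec => [h0|h]; first by unfold Rminus; apply Rplus_opp_r.
by exfalso; apply h; apply Rle_refl.
Qed.

Lemma state_triv n N alg (I : instance n N) t :
  (forall t', t' < t -> round_rot alg I t' = 0) ->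
  forall a : 'I_n, (state alg I t).1 a = a /\ (state alg I t).2 a = nseq t R0.
Proof.
elim: t => [|t IH] H a; first by [].
have IHa := IH (fun t' ht => H t' (ltnW ht)).
have Hr : rot_of alg I (state alg I t).2 = 0 := H t (ltnSn t).
rewrite [state _ _ t.+1]/= Hr nseqS /= addn0 (IHa a).1 modn_small // (IHa a).2.
split => //; congr rcons.
by rewrite /observe addn0 modn_small //; case: chir; apply cw_dist_same.
Qed.

Lemma card_split n (cwb : 'I_n -> bool) :
  #|[pred a | cwb a]| + #|[pred a | ~~ cwb a]| = n.
Proof.
rewrite -[in RHS](card_ord n) -(cardC [pred x | cwb x]); congr (_ + _).
Qed.

Lemma rot_zero_const n (cwb : 'I_n -> bool) :
  Defs.rot_index cwb = 0 -> odd n -> forall a b : 'I_n, cwb a = cwb b.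
Proof.
move=> h o a b; apply: contraTeq isT => hab; exfalso.
have hs := card_split _ cwb.
set x := #|[pred a | cwb a]| in hs h; set y := #|[pred a | ~~ cwb a]| in hs h.
have [hx hy] : 0 < x /\ 0 < y.
  case ha: (cwb a) hab; case hb: (cwb b) => // _.
  - split; [apply/card_gt0P; exists a | apply/card_gt0P; exists b]; by rewrite inE ?ha ?hb.
  - split; [apply/card_gt0P; exists b | apply/card_gt0P; exists a]; by rewrite inE ?ha ?hb.
rewrite /Defs.rot_index -/x -/y in h.
have hd : (n %| `|(x%:Z - y%:Z)%R|)%N.
  have: (n%:Z %| (x%:Z - y%:Z)%R)%Z by apply/dvdz_mod0P; lia.
  by rewrite dvdzE.
have e := odd_double_half n; rewrite o in e.
case: (posnP `|(x%:Z - y%:Z)%R|) => [z|p]; first lia.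
have := dvdn_leq p hd; lia.
Qed.

Lemma rot_const n (cwb : 'I_n -> bool) c :
  (forall a, cwb a = c) -> Defs.rot_index cwb = 0.
Proof.
move=> hc; have hs := card_split _ cwb.
have hz : (if c then #|[pred a | ~~ cwb a]| else #|[pred a | cwb a]|) = 0.
  by case: c hc => hc; apply: eq_card0 => x; rewrite !inE hc.
rewrite /Defs.rot_index; apply/eqP; rewrite absz_eq0; apply/eqP/dvdz_mod0P.
rewrite dvdzE.
have -> : `|(#|[pred a | cwb a]|%:Z - #|[pred a | ~~ cwb a]|%:Z)%R| = n.
  by case: c hz {hc} => hz; lia.
exact: dvdnn.
Qed.

Lemma nontriv0 n r : odd n -> ~~ nontrivial n r -> r = 0.
Proof.
move=> o; rewrite /nontrivial negb_and !negbK => /orP [/eqP //| /eqP e].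
by move: o; rewrite -e odd_double.
Qed.


Definition balg : algorithm := fun id h => odd (iter (size h) half id).

Lemma iter_half x L : iter L half x = x %/ 2 ^ L.
Proof.
elim: L => [|L IH]; first by rewrite divn1.
by rewrite iterS IH -divn2 -divnMA -expnSr.
Qed.

Lemma bits_inj L x y :
  (forall t, t < L -> odd (iter t half x) = odd (iter t half y)) ->
  iter L half x = iter L half y -> x = y.
Proof.
elim: L x y => [|L IH] x y hb hq; first exact hq.
rewrite -(odd_double_half x) -(odd_double_half y) (hb 0 erefl) (IH x./2 y./2) //.
- by move=> t ht; rewrite -!iterSr; apply: hb.
- by rewrite -!iterSr.
Qed.

Arguments nontriv0 {n r}.
Arguments state_triv {n N alg I t}.
Arguments rot_zero_const {n cwb}.
Arguments bits_inj {L x y}.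
Arguments rot_const {n cwb c}.

Lemma upper_bound N n : odd n -> 4 < n -> n <= N ->
  solves_within balg n N (3 * (trunc_log 2 (N %/ n)).+1).
Proof.
move=> on n4 nN I.
set tl := trunc_log 2 (N %/ n).
have [L hL] : {L | L = tl.+3} by exists tl.+3.
apply: NNPP => Hne.
have Htriv : forall t, t < L -> round_rot balg I t = 0.
  move=> t ht; apply: (nontriv0 on); apply/negP => hnt; apply: Hne.
  exists t => //; rewrite hL in ht; lia.
have Hall : forall t, t < L -> forall a b : 'I_n,
    (odd (iter t half (ident I a)) == chir I a) =
    (odd (iter t half (ident I b)) == chir I b).
  move=> t ht a b.
  have hst := state_triv (fun t' ht' => Htriv t' (ltn_trans ht' ht)).
  have := Htriv t ht; rewrite /round_rot /rot_of => /rot_zero_const /(_ on a b) /=.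
  by rewrite /balg !(hst _).2 size_nseq.
set q := N %/ 2 ^ L.
pose g (a : 'I_n) : bool * 'I_q.+1 := (chir I a, inord (iter L half (ident I a))).
have hbound : forall a : 'I_n, iter L half (ident I a) < q.+1.
  move=> a; rewrite ltnS iter_half; apply: leq_div2r.
  by case/andP: (ident_range I a).
have ginj : injective g.
  move=> a b [hc hq]; apply: (@ident_inj _ _ I).
  move: hq => /(congr1 (@nat_of_ord _)); rewrite !inordK ?hbound // => hq.
  apply: (bits_inj _ hq) => t ht.
  move: (Hall t ht a b); rewrite hc.
  by case: (odd (iter t half (ident I a))); case: (odd (iter t half (ident I b))); case: (chir I b).
have := leq_card g ginj; rewrite card_prod card_bool !card_ord => hcard.
have hP := trunc_log_ltn (N %/ n) (isT : 1 < 2).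
rewrite -/tl in hP.
set P := 2 ^ tl.+1 in hP.
have h2L : 2 ^ L = 4 * P by rewrite hL /P !expnS; lia.
have hq1 := leq_divM N (2 ^ L).
rewrite -/q h2L in hq1.
have hn0 : 0 < n by lia.
have hN := divn_eq N n.
have hNm := ltn_pmod N hn0.
have hNlt : N < n * P.
  have : N %/ n + 1 <= P by lia.
  nia.
have hP0 : 0 < P by rewrite /P expn_gt0.
have h4q : 4 * q < n.
  rewrite -(ltn_pmul2r hP0); nia.
lia.
Qed.

Lemma pos_range0 n k : 0 < n -> k < n ->
  Rle R0 (Rdiv (INR k) (INR n)) /\ Rlt (Rdiv (INR k) (INR n)) R1.
Proof.
move=> hn hk; have hn' : Rlt R0 (INR n) by apply: lt_0_INR; apply/ltP.
split.
- unfold Rdiv; apply: Rmult_le_pos; [apply: pos_INR | left; apply: Rinv_0_lt_compat].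
  exact hn'.
- have := Rmult_lt_compat_r (/ INR n) (INR k) (INR n) (Rinv_0_lt_compat _ hn')
    (lt_INR _ _ (elimT ltP hk)).
  rewrite Rinv_r //; apply: Rgt_not_eq; exact hn'.
Qed.

Lemma pos_sorted0 n i j : 0 < n -> i < j ->
  Rlt (Rdiv (INR i) (INR n)) (Rdiv (INR j) (INR n)).
Proof.
move=> hn hij; have hn' : Rlt R0 (INR n) by apply: lt_0_INR; apply/ltP.
apply: Rmult_lt_compat_r; first by apply: Rinv_0_lt_compat.
by apply: lt_INR; apply/ltP.
Qed.

Lemma lower_bound N (alg : algorithm) n T : odd n -> 4 < n -> n <= N ->
  solves_within alg n N T -> trunc_log 2 (N %/ n) <= T.
Proof.
move=> on n4 nN hs.
case: (leqP (trunc_log 2 (N %/ n)) T) => // hlt; exfalso.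
have hn0 : 0 < n by lia.
have hNn : 0 < N %/ n by rewrite divn_gt0.
have h1 := trunc_logP (isT : 1 < 2) hNn.
have h2 : 2 ^ T <= 2 ^ trunc_log 2 (N %/ n) by apply: leq_pexp2l => //; apply: ltnW.
have h3 := leq_divM N n.
have hbig : n * 2 ^ T <= N by nia.
pose h (i : 'I_N) : {ffun 'I_T -> bool} := [ffun t : 'I_T => alg i.+1 (nseq t R0)].
have [w hw] : exists w, n <= #|[pred i | h i == w]|.
  case: (pickP (fun w => n <= #|[pred i | h i == w]|)) => [w hw|hno]; first by exists w.
  exfalso.
  have : N <= \sum_(w : {ffun 'I_T -> bool}) (n.-1).
    rewrite -[X in X <= _](card_ord N) -sum1_card (partition_big h xpredT) //=.
    apply: leq_sum => w _; rewrite sum1_card.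
    have := hno w; move/negbT; rewrite -ltnNge => hl.
    have -> : #|[pred i : 'I_N | true && (h i == w)]| = #|[pred i | h i == w]|.
      by apply: eq_card => x; rewrite !inE.
    lia.
  rewrite sum_nat_const card_ffun card_bool card_ord.
  nia.
set A := [pred i | h i == w] in hw.
pose id0 (a : 'I_n) : nat := (enum_val (A:=A) (widen_ord hw a)).+1.
have id_inj : injective id0.
  move=> a b /eqP; rewrite /id0 eqSS => /eqP /val_inj /enum_val_inj /(congr1 val) /= ab.
  exact: val_inj.
have id_range : forall a, 0 < id0 a <= N.
  by move=> a; rewrite /id0 /= ltn_ord.
have hpr : forall k, k < n -> Rle R0 (Rdiv (INR k) (INR n)) /\ Rlt (Rdiv (INR k) (INR n)) R1.
  by move=> k hk; apply: pos_range0.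
have hps : forall i j, i < j -> j < n -> Rlt (Rdiv (INR i) (INR n)) (Rdiv (INR j) (INR n)).
  by move=> i j hij _; apply: pos_sorted0.
pose I := @Instance n N (fun k => Rdiv (INR k) (INR n)) hpr hps (fun _ => true) id0 id_inj id_range.
have [t ht hnt] := hs I.
have Htriv : forall t, t <= T -> forall t', t' < t -> round_rot alg I t' = 0.
  elim=> [|t0 IH] ht0 t' ht'; first by [].
  case: (ltnP t' t0) => ht''; first by apply: IH => //; apply: ltnW.
  have e : t' = t0 by lia.
  subst t'.
  have hst := @state_triv _ _ alg I t0 (IH (ltnW ht0)).
  rewrite /round_rot /rot_of.
  apply: (@rot_const _ _ (w (Ordinal ht0))) => a.
  rewrite (hst a).2 /= /id0.
  have := enum_valP (A:=A) (widen_ord hw a); rewrite inE => /eqP <-.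
  by rewrite ffunE eqb_id.
move: hnt; rewrite (Htriv t.+1 ht t (ltnSn t)) /nontrivial.
by rewrite eqxx.
Qed.

Theorem proposition3 :
  (exists C : nat, forall N : nat, exists alg : algorithm,
     forall n : nat, odd n -> 4 < n -> n <= N ->
       solves_within alg n N (C * (trunc_log 2 (N %/ n)).+1))
  /\
  (exists c : nat, 0 < c /\
     forall (N : nat) (alg : algorithm) (n T : nat),
       odd n -> 4 < n -> n <= N ->
       solves_within alg n N T -> trunc_log 2 (N %/ n) <= c * T).
Proof.
split.
- exists 3 => N; exists balg => n on n4 nN; exact: upper_bound.
- exists 1; split => // N alg n T on n4 nN hs; rewrite mul1n; exact: (lower_bound _ _ _ _ on n4 nN hs).
Qed.
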